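(* Let $T$ be a well-formed trace satisfying the initial-write property. Then $\mathcal{P}(T) \subseteq \mathcal{P}_{PWR}(T)$; that is, every predictable data race pair $(e,f)$ of $T$ is a potential Lockset-PWR data race pair or a potential Lockset-PWR WRD data race pair of $T$.
   Context: Traces. A trace $T$ is a finite sequence of pairwise distinct events. Each event $e$ belongs to a thread $\mathrm{tid}(e)$ and is one of: a read $r(x)$ or write $w(x)$ of a shared variable $x$, or an acquire $acq(y)$ or release $rel(y)$ of a lock $y$. $\mathrm{pos}_T(e)$ is the index of $e$ in $T$. The projection of $T$ onto thread $i$ is the subsequence of events of thread $i$. $T$ is well-formed if a thread only acquires a lock not currently held and every release $rel(y)$ in thread $i$ has a matching earlier acquire $acq(y)$ in thread $i$ with no other acquire on $y$ in between. A critical section $CS$ on lock $y$ consists of a matching acquire/release pair $acq(CS)$, $rel(CS)$ in thread $i$ together with the events of thread $i$ between them; we write $e \in CS$. The lockset $LS(e)$ of an event $e$ is the set of locks $y$ such that $e$ belongs to some critical section on $y$. Two events are conflicting if they are reads/writes on the same variable, at least one is a write, and they belong to different threads. For a read $e$ on $x$, a write $f$ on $x$ is the last write of $e$ w.r.t. $T$ if $f$ precedes $e$ in $T$ and no other write on $x$ lies strictly between them. $T$ satisfies the initial-write property if every read on $x$ is preceded in $T$ by some write on $x$. Correct reordering. $T'$ is a correctly reordered prefix of $T$ if $T'$ is a sequence of some of the events of $T$ such that: (i) for every thread $i$, the projection of $T'$ onto $i$ is a prefix of the projection of $T$ onto $i$; (ii) for every read $e$ in $T'$ whose last write w.r.t.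 $T$ is $f$, $f$ is in $T'$ and is also the last write of $e$ w.r.t. $T'$; (iii) for any two acquires $e_1,e_2$ on the same lock with $e_1$ before $e_2$ in $T'$, the matching release of $e_1$ is in $T'$ and lies strictly between $e_1$ and $e_2$. Predictable races. $(e,f)$ is a predictable data race pair of $T$ if $e,f$ are conflicting events of $T$ and there is a correctly reordered prefix $T'$ of $T$ in which $e$ appears immediately before $f$; if both are writes we additionally require $\mathrm{pos}_T(e)<\mathrm{pos}_T(f)$. $\mathcal{P}(T)$ denotes the set of all such pairs. PWR relation. $<^{PWR}$ is the smallest strict partial order on the events of $T$ such that: (PO) if $\mathrm{tid}(e)=\mathrm{tid}(f)$ and $\mathrm{pos}_T(e)<\mathrm{pos}_T(f)$ then $e<^{PWR}f$; (WRD) if the write $w$ is the last write w.r.t. $T$ of the read $r$ then $w<^{PWR}r$; (ROD) if $CS, CS'$ are distinct critical sections on the same lock, $e\in CS$, $f\in CS'$ and $e<^{PWR}f$, then $rel(CS)<^{PWR}f$. Potential pairs. $(e,f)$ is a potential Lockset-PWR data race pair if $e,f$ are conflicting, $LS(e)\cap LS(f)=\emptyset$, neither $e<^{PWR}f$ nor $f<^{PWR}e$, and either both are writes or $e$ is a read and $f$ a write. $(e,f)$ is a potential Lockset-PWR WRD data race pair if $e,f$ are conflicting, $e$ is a write, $f$ is a read, $LS(e)\cap LS(f)=\emptyset$, $e<^{PWR}f$, and there is no event $g$ with $e<^{PWR}g<^{PWR}f$. $\mathcal{P}_{PWR}(T)$ is the set of all pairs of either kind. *)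

(* Defs.v *)
From mathcomp Require Import all_boot.
Set Implicit Arguments. Unset Strict Implicit. Unset Printing Implicit Defensive.

Inductive action :=
| Read of nat | Write of nat | Acquire of nat | Release of nat.

Section Traces.
Variables (E : eqType) (tid : E -> nat) (act : E -> action).

Definition is_read (x : nat) (e : E) : Prop := act e = Read x.
Definition is_write (x : nat) (e : E) : Prop := act e = Write x.
Definition is_acq (y : nat) (e : E) : Prop := act e = Acquire y.
Definition is_rel (y : nat) (e : E) : Prop := act e = Release y.
Definition is_access (x : nat) (e : E) : Prop := is_read x e \/ is_write x e.
Definition lock_event (y : nat) (e : E) : Prop := is_acq y e \/ is_rel y e.
Definition is_a_write (e : E) : Prop := exists x, is_write x e.
Definition is_a_read (e : E) : Prop := exists x, is_read x e.

Definition pos (T : seq E) (e : E) : nat := index e T.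

Definition held_by (y : nat) (i : nat) (s : seq E) : Prop :=
  exists s1 a s2, s = s1 ++ a :: s2 /\ is_acq y a /\ tid a = i /\
    forall b, b \in s2 -> ~ lock_event y b.

Definition held (y : nat) (s : seq E) : Prop := exists i, held_by y i s.

Definition well_formed (T : seq E) : Prop :=
  uniq T /\
  forall s1 e s2, T = s1 ++ e :: s2 ->
    (forall y, is_acq y e -> ~ held y s1) /\
    (forall y, is_rel y e -> held_by y (tid e) s1).

Definition matches (T : seq E) (a r : E) : Prop :=
  tid a = tid r /\
  exists y, is_acq y a /\ is_rel y r /\
    exists s1 s2 s3, T = s1 ++ a :: s2 ++ r :: s3 /\
      forall b, b \in s2 -> ~ is_rel y b.

Definition in_CS (T : seq E) (a r e : E) : Prop :=
  matches T a r /\ e \in T /\ tid e = tid a /\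
  pos T a <= pos T e /\ pos T e <= pos T r.

Definition in_LS (T : seq E) (y : nat) (e : E) : Prop :=
  exists a r, is_acq y a /\ in_CS T a r e.

Definition last_write (s : seq E) (w r : E) : Prop :=
  exists x, is_read x r /\ is_write x w /\
    exists s1 s2 s3, s = s1 ++ w :: s2 ++ r :: s3 /\
      forall b, b \in s2 -> ~ is_write x b.

Definition initial_write (T : seq E) : Prop :=
  forall s1 r s2 x, T = s1 ++ r :: s2 -> is_read x r ->
    exists w, w \in s1 /\ is_write x w.

Definition conflicting (e f : E) : Prop :=
  tid e <> tid f /\
  exists x, (is_write x e /\ is_access x f) \/ (is_access x e /\ is_write x f).

Definition correct_reordering (T T' : seq E) : Prop :=
  (forall e, e \in T' -> e \in T) /\
  (forall i, prefix [seq e <- T' | tid e == i] [seq e <- T | tid e == i]) /\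
  (forall r w, r \in T' -> last_write T w r -> last_write T' w r) /\
  (forall y e1 e2 s1 s2 s3, T' = s1 ++ e1 :: s2 ++ e2 :: s3 ->
     is_acq y e1 -> is_acq y e2 ->
     exists r, matches T e1 r /\ r \in s2).

Definition predictable_race (T : seq E) (e f : E) : Prop :=
  e \in T /\ f \in T /\ conflicting e f /\
  (exists T', correct_reordering T T' /\ exists s1 s2, T' = s1 ++ e :: f :: s2) /\
  (is_a_write e -> is_a_write f -> pos T e < pos T f).

Inductive pwr (T : seq E) : E -> E -> Prop :=
| pwr_PO e f : e \in T -> f \in T -> tid e = tid f -> pos T e < pos T f ->
    pwr T e f
| pwr_WRD w r : last_write T w r -> pwr T w r
| pwr_ROD y a r a' r' e f :
    is_acq y a -> is_acq y a' -> (a, r) <> (a', r') ->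
    in_CS T a r e -> in_CS T a' r' f -> pwr T e f -> pwr T r f
| pwr_trans e g f : pwr T e g -> pwr T g f -> pwr T e f.

Definition LS_disjoint (T : seq E) (e f : E) : Prop :=
  forall y, in_LS T y e -> in_LS T y f -> False.

Definition potential_race (T : seq E) (e f : E) : Prop :=
  conflicting e f /\ LS_disjoint T e f /\ ~ pwr T e f /\ ~ pwr T f e /\
  ((is_a_write e /\ is_a_write f) \/ (is_a_read e /\ is_a_write f)).

Definition potential_WRD_race (T : seq E) (e f : E) : Prop :=
  conflicting e f /\ is_a_write e /\ is_a_read f /\ LS_disjoint T e f /\
  pwr T e f /\ ~ (exists g, pwr T e g /\ pwr T g f).

Definition PWR_race (T : seq E) (e f : E) : Prop :=
  potential_race T e f \/ potential_WRD_race T e f.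

End Traces.

(* Main.v *)
Require Import Defs.
From mathcomp Require Import all_boot zify.
From Stdlib Require Import Classical.
Set Implicit Arguments. Unset Strict Implicit.

Section Seqs.
Variable E : eqType.

Lemma notin_pre (s1 s2 : seq E) x : uniq (s1 ++ x :: s2) -> x \notin s1.
Proof.
rewrite cat_uniq => /and3P [_ H _]; apply: contra H => xin.
by apply/hasP; exists x; rewrite ?mem_head.
Qed.

Lemma idx_split (s s1 s2 : seq E) x : uniq s -> s = s1 ++ x :: s2 -> index x s = size s1.
Proof. by move=> U E1; subst; rewrite index_pivot // (notin_pre U). Qed.

Lemma idx_inj (s : seq E) x y : x \in s -> y \in s -> index x s = index y s -> x = y.
Proof. by move=> Hx Hy H; rewrite -(nth_index x Hx) -(nth_index x Hy) H. Qed.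

Lemma first_occ (P : E -> Prop) (s2 : seq E) x s3 t2 z t3 :
  s2 ++ x :: s3 = t2 ++ z :: t3 -> P x -> P z ->
  (forall b, b \in s2 -> ~ P b) -> (forall b, b \in t2 -> ~ P b) ->
  s2 = t2 /\ x = z /\ s3 = t3.
Proof.
elim: s2 t2 => [|b s2 IH] [|c t2] //=.
- by case=> -> ->.
- case=> Hxc _ Px _ _ H2; exfalso; apply: (H2 c); [exact: mem_head| by rewrite -Hxc].
- case=> Hbz _ _ Pz H1 _; exfalso; apply: (H1 b); [exact: mem_head| by rewrite Hbz].
- case=> <- Heq Px Pz H1 H2.
  have [-> [-> ->]] := IH t2 Heq Px Pz (fun b' Hb => H1 b' (mem_behead (s:=b::_) Hb))
     (fun b' Hb => H2 b' (mem_behead (s:=b::_) Hb)).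
  by [].
Qed.

Lemma index_filter_le (a : pred E) s x y : a x -> a y -> x \in s -> y \in s ->
  (index x (filter a s) <= index y (filter a s)) = (index x s <= index y s).
Proof.
move=> ax ay; elim: s => [|z s IH] //=.
rewrite !inE.
case az: (a z) => /=.
- case: (eqVneq z x) => [<-|zx]; case: (eqVneq z y) => [<-|zy]; rewrite ?eqxx //=;
  try by rewrite (eq_sym y) (negbTE zy).
- have zx : z != x by apply/eqP => Hzx; move: az; rewrite Hzx ax.
  have zy : z != y by apply/eqP => Hzx; move: az; rewrite Hzx ay.
  rewrite (eq_sym x) (eq_sym y) (negbTE zx) (negbTE zy) /= => Hx Hy.
  rewrite ltnS; exact: IH.
Qed.
End Seqs.

Section Main.
Variables (E : eqType) (tid : E -> nat) (act : E -> action) (T T' : seq E).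
Hypothesis UT : uniq T.
Hypothesis CR : correct_reordering tid act T T'.

Lemma uniq_threads (s : seq E) :
  (forall i, uniq [seq e <- s | tid e == i]) -> uniq s.
Proof.
elim: s => [|z s IH] //= H; apply/andP; split.
- have := H (tid z); rewrite /= eqxx /= => /andP [Hn _].
  apply: contra Hn => zs; by rewrite mem_filter eqxx zs.
- apply: IH => i; have := H i; rewrite /=; by case: (tid z == i) => //= /andP [].
Qed.

Lemma UT' : uniq T'.
Proof.
case: CR => _ [pre _]; apply: uniq_threads => i.
have := pre i; case/prefixP => u Hu.
have : uniq [seq e <- T | tid e == i] by exact: filter_uniq.
by rewrite Hu cat_uniq => /andP [].
Qed.

Lemma thr_le x y : tid x = tid y -> x \in T -> y \in T' -> index x T <= index y T ->
  x \in T' /\ index x T' <= index y T'.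
Proof.
case: CR => sub [pre _] Hxy xT yT' le.
have yT := sub y yT'.
have := pre (tid y); case/prefixP => u Hu.
have ax : (fun e => tid e == tid y) x by rewrite /= Hxy.
have ay : (fun e => tid e == tid y) y by rewrite /=.
have le' := le; rewrite -(@index_filter_le _ (fun e => tid e == tid y) _ _ _ ax ay xT yT) Hu in le'.
have yf : y \in [seq e <- T' | tid e == tid y] by rewrite mem_filter ay.
rewrite !index_cat yf in le'.
case xf: (x \in [seq e <- T' | tid e == tid y]); rewrite xf in le'.
- have xT' : x \in T' by move: xf; rewrite mem_filter => /andP [].
  by split => //; rewrite -(@index_filter_le _ (fun e => tid e == tid y) _ _ _ ax ay xT' yT').
- exfalso; have := index_mem y [seq e <- T' | tid e == tid y]; rewrite yf => H.
  lia.
Qed.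

Lemma thr_lt x y : tid x = tid y -> x \in T -> y \in T' -> index x T < index y T ->
  x \in T' /\ index x T' < index y T'.
Proof.
move=> Hxy xT yT' lt.
have [xT' le] := thr_le Hxy xT yT' (ltnW lt).
split => //; rewrite ltn_neqAle le andbT; apply/eqP => Heq.
have := idx_inj xT' yT' Heq => exy; subst; by rewrite ltnn in lt.
Qed.

Lemma matches_in a r : matches tid act T a r -> a \in T /\ r \in T.
Proof.
case=> _ [y [_ [_ [s1 [s2 [s3 [-> _]]]]]]].
by rewrite !mem_cat !inE eqxx /= !mem_cat !inE eqxx !orbT.
Qed.

Lemma matches_uniq a r1 r2 : matches tid act T a r1 -> matches tid act T a r2 -> r1 = r2.
Proof.
case=> _ [y [ay [ry [s1 [s2 [s3 [H1 N1]]]]]]].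
case=> _ [y' [ay' [ry' [t1 [t2 [t3 [H2 N2]]]]]]].
have yy : y = y' by move: ay ay'; rewrite /is_acq => -> [].
subst y'.
have := UT; rewrite H1 => U1.
have := UT; rewrite H2 => U2.
have [_ [_ Hr]] := first_occ (P := fun b => b = a) (etrans (esym H1) H2) erefl erefl
  (fun b Hb Hba => (negP (notin_pre U1)) ltac:(by rewrite -Hba))
  (fun b Hb Hba => (negP (notin_pre U2)) ltac:(by rewrite -Hba)).
by have [_ [-> _]] := first_occ (P := is_rel act y) Hr ry ry' N1 N2.
Qed.

Lemma cs_a a r e : in_CS tid act T a r e -> e \in T' -> a \in T' /\ index a T' <= index e T'.
Proof.
case=> M [eT [Hte [le1 le2]]] eT'.
have [aT _] := matches_in M.
by apply: thr_le => //.
Qed.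

Lemma cs_r a r e : in_CS tid act T a r e -> r \in T' -> e \in T' /\ index e T' <= index r T'.
Proof.
case=> M [eT [Hte [le1 le2]]] rT'.
apply: thr_le => //; rewrite Hte; by case: M.
Qed.

Lemma decomp (s : seq E) x z : uniq s -> x \in s -> z \in s -> index x s < index z s ->
  exists s1 s2 s3, s = s1 ++ x :: s2 ++ z :: s3.
Proof.
move=> U xs zs lt; case/splitPr: xs U zs lt => p1 p2 U.
have nx := notin_pre U.
rewrite mem_cat inE => /orP [zp1|/orP [/eqP zx|zp2]].
- rewrite index_cat (negbTE nx) index_cat zp1 /= eqxx addn0 => lt.
  have := index_mem z p1; rewrite zp1; lia.
- by subst; rewrite ltnn.
- move=> _; case/splitPr: zp2 U => q1 q2 _; by exists p1, q1, q2.
Qed.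

Lemma acq_between y a a' : is_acq act y a -> is_acq act y a' -> a \in T' -> a' \in T' ->
  index a T' < index a' T' ->
  exists r, matches tid act T a r /\ r \in T' /\ index a T' < index r T' < index a' T'.
Proof.
move=> ay ay' aT a'T lt.
have [s1 [s2 [s3 HT]]] := decomp UT' aT a'T lt.
case: CR => _ [_ [_ acq]].
have [r [M rs2]] := acq y a a' s1 s2 s3 HT ay ay'.
exists r; split => //.
case/splitPr: rs2 HT => u v HT.
have i1 := idx_split UT' HT.
have i2 : index r T' = size (s1 ++ a :: u).
  apply: (idx_split UT' (s2 := v ++ a' :: s3)); by rewrite HT -!catA /= -?catA /= -?catA.
have i3 : index a' T' = size (s1 ++ a :: u ++ r :: v).
  apply: (idx_split UT' (s2 := s3)); by rewrite HT -!catA /= -?catA /= -?catA.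
split; first by rewrite HT !(mem_cat, inE) eqxx !orbT.
rewrite i1 i2 i3 !size_cat /= !size_cat /=; lia.
Qed.

Lemma cs_order y a r e a' r' f : is_acq act y a -> is_acq act y a' -> a <> a' ->
  in_CS tid act T a r e -> in_CS tid act T a' r' f -> e \in T' -> f \in T' ->
  (r \in T' /\ index r T' < index a' T') \/ (r' \in T' /\ index r' T' < index a T').
Proof.
move=> ay ay' aa C1 C2 eT fT.
have [aT _] := cs_a C1 eT.
have [a'T _] := cs_a C2 fT.
case: (ltngtP (index a T') (index a' T')) => lt.
- have [r0 [M [r0T /andP [_ lt2]]]] := acq_between ay ay' aT a'T lt.
  left; by rewrite -(matches_uniq M (proj1 C1)).
- have [r0 [M [r0T /andP [_ lt2]]]] := acq_between ay' ay a'T aT lt.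
  right; by rewrite -(matches_uniq M (proj1 C2)).
- by exfalso; apply: aa; apply: idx_inj aT a'T lt.
Qed.

Lemma sound e f : pwr tid act T e f -> f \in T' -> e \in T' /\ index e T' < index f T'.
Proof.
elim=> {e f}.
- move=> e f eT fT Ht lt fT'; exact: thr_lt.
- move=> w r LW rT.
  case: CR => _ [_ [lw _]].
  have [x [_ [_ [s1 [s2 [s3 [HT _]]]]]]] := lw r w rT LW.
  have i1 := idx_split UT' HT.
  have i2 : index r T' = size (s1 ++ w :: s2).
    apply: (idx_split UT' (s2 := s3)); by rewrite HT -catA.
  split; first by rewrite HT mem_cat inE eqxx orbT.
  rewrite i1 i2 size_cat /=; lia.
- move=> y a r a' r' e f ay ay' neq C1 C2 _ IH fT.
  have [eT lt] := IH fT.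
  have aa : a <> a'.
    move=> Ha; subst a'; apply: neq.
    by rewrite (matches_uniq (proj1 C1) (proj1 C2)).
  have [a'T le1] := cs_a C2 fT.
  case: (cs_order ay ay' aa C1 C2 eT fT) => [[rT lt2]|[r'T lt2]].
  + split => //; lia.
  + have [_ le2] := cs_a C1 eT.
    have [_ le3] := cs_r C2 r'T.
    exfalso; lia.
- move=> e g f _ IH1 _ IH2 fT.
  have [gT lt2] := IH2 fT.
  have [eT lt1] := IH1 gT.
  split => //; lia.
Qed.


Lemma pwr_cases e f : pwr tid act T e f ->
  tid e = tid f \/ last_write act T e f \/ (exists y, act e = Release y) \/
  (exists g, pwr tid act T e g /\ pwr tid act T g f).
Proof.
case.
- by move=> e0 f0 _ _ H _; left.
- by move=> w r H; right; left.
- move=> y a r a' r' e0 f0 _ _ _ [[_ [y0 [_ [Hr _]]]] _] _ _.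
  by right; right; left; exists y0.
- move=> e0 g f0 H1 H2; by right; right; right; exists g.
Qed.

Lemma last_w (p : seq E) x : (exists w, w \in p /\ is_write act x w) ->
  exists q1 w q2, p = q1 ++ w :: q2 /\ is_write act x w /\
    forall b, b \in q2 -> ~ is_write act x b.
Proof.
elim: p => [|c p IH] [w [wp Hw]]; first by rewrite in_nil in wp.
case: (classic (exists w, w \in p /\ is_write act x w)) => [Hex|Hno].
- have [q1 [w' [q2 [-> H]]]] := IH Hex; by exists (c :: q1), w', q2.
- move: wp; rewrite inE => /orP [/eqP Hwc|wp].
  + subst w; exists [::], c, p; split => //; split => // b bp Hb.
    by apply: Hno; exists b.
  + by exfalso; apply: Hno; exists w.
Qed.

Lemma main_in e f s1 s2 : initial_write act T -> e \in T -> f \in T ->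
  conflicting tid act e f -> T' = s1 ++ e :: f :: s2 -> PWR_race tid act T e f.
Proof.
move=> IW eT fT conf HT.
have ie : index e T' = size s1 := idx_split UT' HT.
have if' : index f T' = (size s1).+1.
  rewrite (idx_split UT' (s1 := s1 ++ [:: e]) (s2 := s2)); first by rewrite size_cat addn1.
  by rewrite HT -catA.
have eT' : e \in T' by rewrite HT mem_cat inE eqxx orbT.
have fT' : f \in T' by rewrite HT mem_cat !inE eqxx !orbT.
have nofe : ~ pwr tid act T f e.
  by move=> H; have [_ lt] := sound H eT'; lia.
have nomid : ~ exists g, pwr tid act T e g /\ pwr tid act T g f.
  case=> g [H1 H2]; have [gT lt2] := sound H2 fT'; have [_ lt1] := sound H1 gT; lia.
have [x [Hae Haf]] : exists x, (act e = Read x \/ act e = Write x) /\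
    (act f = Read x \/ act f = Write x).
  case: (conf) => _ [x Hx]; exists x; move: Hx.
  rewrite /is_write /is_read /is_access /is_write /is_read; tauto.
have nrel : forall y r, act r = Release y -> e <> r.
  by move=> y r Hr Her; subst r; case: Hae; rewrite Hr.
have LSd : LS_disjoint tid act T e f.
  move=> y [a [r [ay C1]]] [a' [r' [ay' C2]]].
  have aa : a <> a'.
    move=> Ha; subst a'; apply: (proj1 conf).
    by rewrite (proj1 (proj2 (proj2 C1))) (proj1 (proj2 (proj2 C2))).
  case: (cs_order ay ay' aa C1 C2 eT' fT') => [[rT lt]|[r'T lt]].
  - have [_ le1] := cs_r C1 rT; have [_ le2] := cs_a C2 fT'.
    have [_ [y0 [_ [Hr _]]]] := proj1 C1.
    have ner := nrel _ _ Hr.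
    have : index e T' <> index r T' by move=> Hi; apply: ner; apply: idx_inj Hi.
    lia.
  - have [_ le1] := cs_a C1 eT'; have [_ le2] := cs_r C2 r'T; lia.
case: Haf => af.
- have ae : act e = Write x.
    case: Hae => // ae; exfalso.
    case: conf => _ [x0 Hx]; move: Hx; rewrite /is_write /is_access /is_read /is_write ae af.
    by case=> [[H _]|[_ H]].
  right; split => //; split; first by exists x.
  split; first by exists x.
  split => //; split => //.
  have [p1 [p2 HTp]] : exists p1 p2, T = p1 ++ f :: p2.
    by exists (take (index f T) T), (drop (index f T).+1 T); rewrite -drop_index // cat_take_drop.
  have HT' := HT.
  have [w [wp Hw]] := IW p1 f p2 x HTp af.
  have [q1 [w' [q2 [Hp [Hw' Nq]]]]] := last_w (ex_intro _ w (conj wp Hw)).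
  have LWT : last_write act T w' f.
    rewrite HTp.
    exists x; split => //; split => //; exists q1, q2, p2; split => //.
    by rewrite Hp -catA.
  have HT'' := HT'.
  case: CR => _ [_ [lw _]].
  have [x1 [rx1 [wx1 [t1 [t2 [t3 [HT2 Nt]]]]]]] := lw f w' fT' LWT.
  have xx : x1 = x by move: rx1; rewrite /is_read af => -[].
  subst x1.
  have U := UT'.
  have Heq : (s1 ++ [:: e]) ++ f :: s2 = (t1 ++ w' :: t2) ++ f :: t3.
    by rewrite -!catA -HT2 HT.
  have N1 : forall b, b \in s1 ++ [:: e] -> ~ b = f.
    move=> b bs bf; subst b.
    have U' : uniq ((s1 ++ [:: e]) ++ f :: s2) by rewrite -catA -HT.
    by move/negP: (notin_pre U').
  have N2 : forall b, b \in t1 ++ w' :: t2 -> ~ b = f.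
    move=> b bs bf; subst b.
    have U' : uniq ((t1 ++ w' :: t2) ++ f :: t3) by rewrite -catA -HT2.
    by move/negP: (notin_pre U').
  have [Hpre _] := first_occ (P := fun b => b = f) Heq erefl erefl N1 N2.
  have -> : e = w'.
    move: Hpre; case/lastP: t2 Nt {N2 Heq HT2} => [|t2' z] Nt.
    * by rewrite !cats1 => /rcons_inj [_ ->].
    * rewrite cats1 -rcons_cons -rcons_cat => /rcons_inj [_ Hez].
      exfalso; apply: (Nt z); first by rewrite mem_rcons mem_head.
      by rewrite -Hez /is_write ae.
  by apply: pwr_WRD.
- left; split => //; split => //; split.
  + move=> H; case: (pwr_cases H) => [Ht|[LW|[[y Hy]|Hg]]].
    * exact: (proj1 conf).
    * by case: LW => x0 [Hr _]; move: Hr; rewrite /is_read af.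
    * by case: Hae; rewrite Hy.
    * exact: nomid.
  + split => //; case: Hae => ae.
    * by right; split; exists x.
    * by left; split; exists x.
Qed.
End Main.

Theorem mainTheorem1 (E : eqType) (tid : E -> nat) (act : E -> action)
  (T : seq E) :
  well_formed tid act T -> initial_write act T ->
  forall e f, predictable_race tid act T e f -> PWR_race tid act T e f.
Proof.
move=> [UT _] IW e f [eT [fT [conf [[T' [CR [s1 [s2 HT]]]] _]]]].
exact: (main_in UT CR IW eT fT conf HT).
Qed.
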